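(* Let $W$ be a real vector space, $e_1,\dots,e_n\in W$ and $\phi_1,\dots,\phi_n\in\operatorname{Hom}_{\mathbb{R}}(W,\mathbb{R})$ such that (a) $\{(a_1,\dots,a_n)\in\mathbb{R}_{\ge0}^n:a_1e_1+\cdots+a_ne_n=0\}=\{0\}$; (b) $\phi_i(e_j)\ge0$ for all $i\neq j$; (c) $\{x\in\mathbb{R}_{\ge0}e_1+\cdots+\mathbb{R}_{\ge0}e_n:\phi_i(x)\ge0\text{ for all }i\}=\{0\}$. Then: (1) for $Q=(\phi_i(e_j))_{i,j}$ there are $n\times n$ matrices $A$ (lower triangular) and $B$ (upper triangular) with non-negative entries, $\det A>0$, $\det B>0$ and $AQB=-I_n$; moreover, if $Q$ is symmetric one can take $B={}^tA$; (2) $e_1,\dots,e_n$ are linearly independent in $W/\{x\in W:\phi_1(x)=\cdots=\phi_n(x)=0\}$. *)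

(* Defs.v *)
From HB Require Import structures.
From mathcomp Require Import all_boot all_order all_algebra.
From mathcomp Require Import reals.
Set Implicit Arguments. Unset Strict Implicit. Unset Printing Implicit Defensive.
Import Order.TTheory GRing.Theory Num.Theory.
Local Open Scope ring_scope.

Definition lower_triangular (R : nzRingType) n (A : 'M[R]_n) : Prop :=
  forall i j : 'I_n, (i < j)%N -> A i j = 0.
Definition upper_triangular (R : nzRingType) n (A : 'M[R]_n) : Prop :=
  forall i j : 'I_n, (j < i)%N -> A i j = 0.
Definition nonneg_mx (R : numDomainType) n (A : 'M[R]_n) : Prop :=
  forall i j : 'I_n, 0 <= A i j.

Definition pairing_mx (R : realType) (W : lmodType R) n
  (e : 'I_n -> W) (phi : 'I_n -> {scalar W}) : 'M[R]_n :=
  \matrix_(i, j) phi i (e j).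

Definition good_pair (R : realType) n (Q A B : 'M[R]_n) : Prop :=
  [/\ lower_triangular A, upper_triangular B, nonneg_mx A & nonneg_mx B] /\
  [/\ 0 < \det A, 0 < \det B & A *m Q *m B = - 1%:M].

(* Main.v *)
Require Import Defs.
From HB Require Import structures.
From mathcomp Require Import all_boot all_order all_algebra.
From mathcomp Require Import reals.
Import Order.TTheory GRing.Theory Num.Theory.
Local Open Scope ring_scope.
Set Implicit Arguments. Unset Strict Implicit.

Lemma ord_case1 n (P : 'I_(1 + n) -> Prop) :
  (forall i0 : 'I_1, P (lshift n i0)) -> (forall k : 'I_n, P (rshift 1 k)) ->
  forall i, P i.
Proof. by move=> H1 H2 i; case: (split_ordP i) => [i0 ->|k ->]. Qed.

Lemma lower_mul (R : realType) n (A B : 'M[R]_n) :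
  lower_triangular A -> lower_triangular B -> lower_triangular (A *m B).
Proof.
move=> hA hB i j lij; rewrite mxE big1 // => k _.
case: (ltnP i k) => hik; first by rewrite hA // mul0r.
by rewrite hB ?mulr0 // (leq_ltn_trans hik lij).
Qed.

Lemma upper_lowerT (R : realType) n (A : 'M[R]_n) :
  upper_triangular A <-> lower_triangular A^T.
Proof.
split=> h i j lij; first by rewrite mxE h.
by have := h j i lij; rewrite mxE.
Qed.

Lemma upper_mul (R : realType) n (A B : 'M[R]_n) :
  upper_triangular A -> upper_triangular B -> upper_triangular (A *m B).
Proof.
move=> /upper_lowerT hA /upper_lowerT hB; apply/upper_lowerT.
by rewrite trmx_mul; apply: lower_mul.
Qed.

Lemma nonneg_mul (R : realType) n (A B : 'M[R]_n) :
  nonneg_mx A -> nonneg_mx B -> nonneg_mx (A *m B).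
Proof.
by move=> hA hB i j; rewrite mxE sumr_ge0 // => k _; rewrite mulr_ge0.
Qed.

Lemma nonneg_tr (R : realType) n (A : 'M[R]_n) :
  nonneg_mx A -> nonneg_mx A^T.
Proof. by move=> h i j; rewrite mxE. Qed.

Lemma nonneg_block (R : realType) n (a : 'M[R]_1) (Aur : 'M_(1, n)) (Adl : 'M_(n, 1)) (Adr : 'M_n) :
  (0 <= a 0 0) -> (forall j, 0 <= Aur 0 j) -> (forall i, 0 <= Adl i 0) ->
  nonneg_mx Adr -> nonneg_mx (block_mx a Aur Adl Adr : 'M_(1 + n)).
Proof.
move=> h1 h2 h3 h4 i j; move: i j.
apply: ord_case1 => i0; apply: ord_case1 => j0;
  rewrite ?block_mxEul ?block_mxEur ?block_mxEdl ?block_mxEdr ?(ord1 i0) ?(ord1 j0) //.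
Qed.

Lemma lower_block (R : realType) n (a : 'M[R]_1) (Adl : 'M_(n, 1)) (Adr : 'M_n) :
  lower_triangular Adr -> lower_triangular (block_mx a 0 Adl Adr : 'M_(1 + n)).
Proof.
move=> h i j; move: i j.
apply: ord_case1 => i0; apply: ord_case1 => j0 /=;
  rewrite ?block_mxEul ?block_mxEur ?block_mxEdl ?block_mxEdr ?mxE //.
- by rewrite (ord1 i0) (ord1 j0).
- by rewrite ltnNge (leq_trans _ (leq_addr _ _)) //; case: j0 => [[]].
- by rewrite ltn_add2l => /h.
Qed.

Lemma upper_block (R : realType) n (a : 'M[R]_1) (Aur : 'M_(1, n)) (Adr : 'M_n) :
  upper_triangular Adr -> upper_triangular (block_mx a Aur 0 Adr : 'M_(1 + n)).
Proof.
move=> /upper_lowerT h; apply/upper_lowerT.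
by rewrite tr_block_mx trmx0; apply: lower_block.
Qed.

Definition Zprop (R : realType) n (Q : 'M[R]_n) := forall i j, i != j -> 0 <= Q i j.
Definition Mprop (R : realType) n (Q : 'M[R]_n) :=
  forall a : 'cV[R]_n, (forall i, 0 <= a i 0) -> (forall i, 0 <= (Q *m a) i 0) -> a = 0.
Definition concl (R : realType) n (Q : 'M[R]_n) :=
  exists A B, good_pair Q A B /\ (Q^T = Q -> B = A^T).

Lemma lr_neq n (i : 'I_1) (k : 'I_n) : lshift n i != rshift 1 k.
Proof. by rewrite eq_lrshift. Qed.
Lemma rl_neq n (i : 'I_1) (k : 'I_n) : rshift 1 k != lshift n i.
Proof. by rewrite eq_sym eq_lrshift. Qed.

Lemma step_q (R : realType) n (q : 'M[R]_1) r c (Q' : 'M_n) :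
  Zprop (block_mx q r c Q' : 'M_(1 + n)) -> Mprop (block_mx q r c Q' : 'M_(1 + n)) ->
  q 0 0 < 0.
Proof.
move=> hZ hM; rewrite ltNge; apply/negP => hq.
have := hM (col_mx 1 0); rewrite mul_block_col !mulmx1 !mulmx0 !addr0.
have h : forall i, 0 <= (col_mx 1 0 : 'cV[R]_(1 + n)) i 0.
  apply: ord_case1 => i0; rewrite ?col_mxEu ?col_mxEd !mxE ?(ord1 i0) //.
have h2 : forall i, 0 <= (col_mx q c : 'cV[R]_(1 + n)) i 0.
  apply: ord_case1 => i0; rewrite ?col_mxEu ?col_mxEd ?(ord1 i0) //.
  by have := hZ (rshift 1 i0) (lshift n 0) (rl_neq _ _); rewrite block_mxEdl.
move=> /(_ h h2) /matrixP /(_ (lshift n 0) 0).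
by rewrite col_mxEu !mxE /= => /eqP; rewrite oner_eq0.
Qed.

Lemma step_S (R : realType) n (q : 'M[R]_1) r c (Q' : 'M_n) :
  Zprop (block_mx q r c Q' : 'M_(1 + n)) -> Mprop (block_mx q r c Q' : 'M_(1 + n)) ->
  let k := (- q 0 0)^-1 in
  Zprop (Q' + k *: (c *m r)) /\ Mprop (Q' + k *: (c *m r)).
Proof.
move=> hZ hM k.
have hq := step_q hZ hM.
have hk : 0 < k by rewrite /k invr_gt0 oppr_gt0.
have hc : forall i, 0 <= c i 0.
  by move=> i; have := hZ _ _ (rl_neq 0 i); rewrite block_mxEdl.
have hr : forall j, 0 <= r 0 j.
  by move=> j; have := hZ _ _ (lr_neq 0 j); rewrite block_mxEur.
split.
  move=> i j hij; rewrite !mxE addr_ge0 //.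
    have : rshift 1 i != rshift 1 j by rewrite (inj_eq (@rshift_inj _ _)).
    by move/hZ; rewrite block_mxEdr.
  rewrite mulr_ge0 ?(ltW hk) // sumr_ge0 // => l _.
  by rewrite (ord1 l) mulr_ge0.
move=> a ha hSa.
pose a1 : 'M[R]_1 := k *: (r *m a).
have eq : block_mx q r c Q' *m col_mx a1 a = col_mx 0 ((Q' + k *: (c *m r)) *m a).
  rewrite mul_block_col; congr col_mx.
    rewrite [q]mx11_scalar mul_scalar_mx /a1 scalerA.
    have -> : q 0 0 * k = -1 by rewrite /k invrN mulrN divff // (negbT (lt_eqF hq)).
    by rewrite scaleN1r addNr.
  by rewrite mulmxDl addrC /a1 -scalemxAr -scalemxAl mulmxA.
have := hM (col_mx a1 a).
rewrite eq => H.
have : col_mx a1 a = 0.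
  apply: H.
    apply: ord_case1 => i0; rewrite ?col_mxEu ?col_mxEd // (ord1 i0) !mxE.
    rewrite mulr_ge0 ?(ltW hk) // sumr_ge0 // => l _.
    by rewrite mulr_ge0.
  by apply: ord_case1 => i0; rewrite ?col_mxEu ?col_mxEd // mxE.
by move/(congr1 dsubmx); rewrite col_mxKd => ->; rewrite -col_mx0 col_mxKd.
Qed.

Lemma step (R : realType) n (q : 'M[R]_1) r c (Q' : 'M_n) :
  Zprop (block_mx q r c Q' : 'M_(1 + n)) -> Mprop (block_mx q r c Q' : 'M_(1 + n)) ->
  let k := (- q 0 0)^-1 in
  concl (Q' + k *: (c *m r)) -> concl (block_mx q r c Q' : 'M_(1 + n)).
Proof.
move=> hZ hM k [A' [B' [[[lA uB nA nB] [dA dB eAB]] hsym]]].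
have hq := step_q hZ hM.
have hk : 0 < k by rewrite /k invr_gt0 oppr_gt0.
have hc : forall i, 0 <= c i 0.
  by move=> i; have := hZ _ _ (rl_neq 0 i); rewrite block_mxEdl.
have hr : forall j, 0 <= r 0 j.
  by move=> j; have := hZ _ _ (lr_neq 0 j); rewrite block_mxEur.
pose s := (Num.sqrt (- q 0 0))^-1.
have hs : 0 < s by rewrite invr_gt0 sqrtr_gt0 oppr_gt0.
pose D1 : 'M[R]_(1 + n) := block_mx s%:M 0 0 A'.
pose D2 : 'M[R]_(1 + n) := block_mx s%:M 0 0 B'.
pose L1 : 'M[R]_(1 + n) := block_mx 1 0 (k *: c) 1.
pose U1 : 'M[R]_(1 + n) := block_mx 1 (k *: r) 0 1.
exists (D1 *m L1), (U1 *m D2).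
have qk : q 0 0 * k = -1.
  by rewrite /k invrN mulrN divff // (negbT (lt_eqF hq)).
split; last first.
  move=> /(congr1 trmx); rewrite trmxK tr_block_mx => e.
  have erc : r^T = c by have := congr1 dlsubmx e; rewrite !block_mxKdl.
  have eQ : Q'^T = Q' by have := congr1 drsubmx e; rewrite !block_mxKdr.
  have eS : (Q' + k *: (c *m r))^T = Q' + k *: (c *m r).
    by rewrite linearD /= linearZ /= trmx_mul eQ -erc trmxK.
  rewrite trmx_mul /D1 /L1 /U1 /D2 !tr_block_mx !trmx0 !trmx1 tr_scalar_mx -hsym //.
  by rewrite linearZ /= -erc trmxK.
split.
  split.
  - apply: lower_mul; apply: lower_block => //.
    by move=> i j lij; rewrite mxE (_ : (i == j) = false) // -val_eqE /= ltn_eqF.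
  - apply: upper_mul; apply: upper_block => //.
    by move=> i j lij; rewrite mxE (_ : (i == j) = false) // -val_eqE /= gtn_eqF.
  - apply: nonneg_mul; apply: nonneg_block => //; do ?move=> ?;
      rewrite !mxE ?ler0n ?(ltW hs) ?mulr_ge0 ?(ltW hk) //.
  - apply: nonneg_mul; apply: nonneg_block => //; do ?move=> ?;
      rewrite !mxE ?ler0n ?(ltW hs) ?mulr_ge0 ?(ltW hk) //.
split.
- by rewrite det_mulmx /D1 /L1 !det_lblock !det1 det_mx11 mxE /= !mulr1 mulr_gt0.
- by rewrite det_mulmx /D2 /U1 !det_ublock !det1 det_mx11 mxE /= !mulr1 !mul1r mulr_gt0.
have e1 : L1 *m block_mx q r c Q' *m U1 = block_mx (q 0 0)%:M 0 0 (Q' + k *: (c *m r)).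
  rewrite /L1 /U1 !mulmx_block !mul1mx !mul0mx !mulmx1 !mulmx0 ?addr0 ?add0r.
  have hcq : k *: c *m q = - c.
    by rewrite {1}[q]mx11_scalar mul_mx_scalar scalerA qk scaleN1r.
  have hqr : q *m (k *: r) = - r.
    by rewrite {1}[q]mx11_scalar mul_scalar_mx scalerA qk scaleN1r.
  by rewrite hcq hqr !addNr mul0mx add0r addrC scalemxAl -mx11_scalar.
have -> : D1 *m L1 *m block_mx q r c Q' *m (U1 *m D2) =
          D1 *m (L1 *m block_mx q r c Q' *m U1) *m D2 by rewrite !mulmxA.
rewrite e1 /D1 /D2 !mulmx_block !mulmx0 !mul0mx !addr0 !add0r eAB.
rewrite -!scalar_mxM.
have -> : s * q 0 0 * s = -1.
  rewrite mulrC mulrA -expr2 exprVn sqr_sqrtr ?oppr_ge0 ?(ltW hq) //.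
  by rewrite invrN mulNr mulVf // (negbT (lt_eqF hq)).
by rewrite !mul0mx (scalar_mx_block 1 n) opp_block_mx !oppr0 raddfN.
Qed.

Lemma mainmx (R : realType) n (Q : 'M[R]_n) : Zprop Q -> Mprop Q -> concl Q.
Proof.
elim: n Q => [|n IH] Q hZ hM.
  exists 1%:M, 1%:M; split; last by rewrite trmx1.
  split; first by split; move=> [].
  split; rewrite ?det1 ?ltr01 //.
  by apply/matrixP => -[].
move: Q hZ hM; rewrite -[n.+1]/(1 + n) => Q.
rewrite -[Q]submxK; move: (ulsubmx Q) (ursubmx Q) (dlsubmx Q) (drsubmx Q) => q r c Q' hZ hM.
apply: step => //; have [hZ' hM'] := step_S hZ hM.
exact: IH.
Qed.

Unset Implicit Arguments.
Theorem lemma1p2p3 (R : realType) (W : lmodType R) (n : nat)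
  (e : 'I_n -> W) (phi : 'I_n -> {scalar W})
  (ha : forall a : 'I_n -> R, (forall i, 0 <= a i) ->
          \sum_(i < n) a i *: e i = 0 -> forall i, a i = 0)
  (hb : forall i j : 'I_n, i != j -> 0 <= phi i (e j))
  (hc : forall x : W,
          (exists2 a : 'I_n -> R, (forall i, 0 <= a i) & x = \sum_(i < n) a i *: e i) ->
          (forall i, 0 <= phi i x) -> x = 0) :
  ((exists A B : 'M[R]_n, good_pair (pairing_mx e phi) A B) /\
   ((pairing_mx e phi)^T = pairing_mx e phi ->
     exists A : 'M[R]_n, good_pair (pairing_mx e phi) A A^T)) /\
  (forall c : 'I_n -> R,
     (forall k, phi k (\sum_(j < n) c j *: e j) = 0) -> forall j, c j = 0).
Proof.
set Q := pairing_mx e phi.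
have hQv : forall (v : 'cV[R]_n) i,
    (Q *m v) i 0 = phi i (\sum_(j < n) v j 0 *: e j).
  move=> v i; rewrite mxE raddf_sum; apply: eq_bigr => j _.
  rewrite mxE mulrC; symmetry; exact: (linearZ_LR (phi i)).
have hZ : Zprop Q by move=> i j /hb; rewrite mxE.
have hM : Mprop Q.
  move=> a ha0 hQa.
  have hx : \sum_(j < n) a j 0 *: e j = 0.
    apply: hc; first by exists (fun j => a j 0).
    by move=> i; rewrite -hQv.
  apply/matrixP => i j; rewrite (ord1 j) mxE.
  exact: (ha (fun j => a j 0)).
have [A [B [gAB hsym]]] := mainmx hZ hM.
split.
  split; first by exists A, B.
  by move=> hT; exists A; rewrite -hsym.
move=> c hc0.
case: gAB => _ [dA dB eAB].
have uQ : Q \in unitmx.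
  rewrite unitmxE unitfE; apply/eqP => dQ.
  have := congr1 determinant eAB.
  rewrite !det_mulmx dQ mulr0 mul0r -raddfN det_scalar => /esym /eqP.
  by rewrite expf_eq0 oppr_eq0 oner_eq0 andbF.
pose cv : 'cV[R]_n := \col_j c j.
have hcv : Q *m cv = 0.
  apply/matrixP => k i; rewrite (ord1 i) hQv mxE -[RHS](hc0 k).
  by congr (phi k _); apply: eq_bigr => j _; rewrite mxE.
move=> j.
have : cv = 0 by rewrite -(mulKmx uQ cv) hcv mulmx0.
by move/matrixP/(_ j 0); rewrite !mxE.
Qed.
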